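(* Let $n \ge 4$ and let $FQ_n$, $M_0$, $M_1$, $M_2$ be as defined in the context. Let $M$ be a perfect matching of $FQ_n$ such that $M \subseteq M_0 \cup M_1 \cup M_2$ and $M \neq M_i$ for every $i \in \{0,1,2\}$. Then the graph $FQ_n - M$ (obtained by deleting the edges of $M$, keeping all vertices) is not isomorphic to the hypercube $Q_n$.
   Context: The hypercube $Q_n$ has vertex set $\{0,1\}^n$, with $x=(x_1,\dots,x_n)$ and $y$ adjacent iff they differ in exactly one coordinate. For $x \in \{0,1\}^n$ let $\overline{x}$ denote the complement of $x$, i.e. every coordinate is flipped. The folded hypercube $FQ_n$ is the graph on $\{0,1\}^n$ whose edge set consists of all edges of $Q_n$ together with all edges $\{x,\overline{x}\}$ for $x \in \{0,1\}^n$ (these are called complement edges). Define the following edge sets of $FQ_n$: $M_1$ is the set of pairs $\{x,y\}$ differing exactly in coordinate $n$; $M_2 = \{\{x,\overline{x}\} : x \in \{0,1\}^n\}$; $M_0$ is the set of pairs $\{x,y\}$ differing exactly in coordinate $n-1$. *)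

(* Defs.v *)
From mathcomp Require Import all_boot.
Set Implicit Arguments. Unset Strict Implicit. Unset Printing Implicit Defensive.

(* Vertices of Q_n / FQ_n: {0,1}^n, coordinates 1..n are the indices 0..n-1. *)
Definition vtx (n : nat) := {ffun 'I_n -> bool}.

Definition differ_at n (x y : vtx n) (k : nat) : bool :=
  [forall j : 'I_n, (x j != y j) == (val j == k)].

Definition is_compl n (x y : vtx n) : bool := [forall j : 'I_n, y j == ~~ x j].

Definition Qadj n : rel (vtx n) := fun x y => [exists i : 'I_n, differ_at x y i].

Definition FQadj n : rel (vtx n) := fun x y => Qadj x y || is_compl x y.

Definition M1 n : rel (vtx n) := fun x y => differ_at x y n.-1.
Definition M2 n : rel (vtx n) := fun x y => is_compl x y.
Definition M0 n : rel (vtx n) := fun x y => differ_at x y n.-2.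

Definition perfect_matching (T : finType) (adj m : rel T) : Prop :=
  (forall x y, m x y = m y x) /\
  (forall x y, m x y -> adj x y) /\
  (forall x, #|[set y | m x y]| = 1).

Definition del_edges (T : finType) (adj m : rel T) : rel T :=
  fun x y => adj x y && ~~ m x y.

Definition isomorphic (T U : finType) (g : rel T) (h : rel U) : Prop :=
  exists f : T -> U, bijective f /\ forall x y, g x y = h (f x) (f y).

(* Main.v *)
Require Import Defs.
From mathcomp Require Import all_boot.
From mathcomp Require Import zify.
Set Implicit Arguments. Unset Strict Implicit. Unset Printing Implicit Defensive.

Definition vd n (d : option 'I_n) (j : 'I_n) : bool :=
  if d is Some k then j == k else true.
Definition nb n (d : option 'I_n) (x : vtx n) : vtx n :=
  [ffun j => x j (+) vd d j].

Lemma nbK n d (x : vtx n) : nb d (nb d x) = x.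
Proof. apply/ffunP => j; rewrite !ffunE; by case: (x j); case: (vd d j). Qed.

Lemma nbC n a b (x : vtx n) : nb a (nb b x) = nb b (nb a x).
Proof.
apply/ffunP => j; rewrite !ffunE.
by case: (x j); case: (vd a j); case: (vd b j).
Qed.

Lemma avoid3 n (a b c : 'I_n) : 3 < n -> exists j : 'I_n, j \notin [:: a; b; c].
Proof.
move=> hn; apply/existsP; rewrite -negb_forall; apply/negP => /forallP H.
have : #|'I_n| <= #|[:: a; b; c]|.
  apply: subset_leq_card; apply/subsetP => j _; exact: H.
rewrite card_ord => h; have := card_size [:: a; b; c]; rewrite /= => h2; have := leq_trans h h2; lia.
Qed.

Lemma nb_inj n a b (x : vtx n) : 3 < n -> nb a x = nb b x -> a = b.
Proof.
move=> hn /ffunP H.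
have E j : vd a j = vd b j.
  by move: (H j); rewrite !ffunE; case: (x j); case: (vd a j); case: (vd b j).
clear H; case: a b E => [ka|] [kb|] //= E.
- by move: (E ka); rewrite eqxx => /esym/eqP ->.
- have [j] := avoid3 ka ka ka hn; rewrite !inE !negb_or => /and3P [/negbTE hj _ _].
  by move: (E j); rewrite hj.
- have [j] := avoid3 kb kb kb hn; rewrite !inE !negb_or => /and3P [/negbTE hj _ _].
  by move: (E j); rewrite hj.
Qed.

Lemma key n a b c (k : 'I_n) (x : vtx n) : 3 < n -> c != Some k ->
  nb b (nb a x) = nb c (nb (Some k) x) ->
  (a = c /\ b = Some k) \/ (a = Some k /\ b = c).
Proof.
move=> hn hc /ffunP H.
have E j : vd a j (+) vd b j = vd c j (+) (j == k).
  move: (H j); rewrite !ffunE /=.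
  by case: (x j); case: (vd a j); case: (vd b j); case: (vd c j); case: (j == k).
clear H.
case: c hc E => [kc|] hc E.
- have hkc : kc != k by apply: contra hc => /eqP ->.
  case: a b E => [ka|] [kb|] /= E.
  + have E1 := E kc; rewrite eqxx (negbTE hkc) /= in E1.
    case: (eqVneq ka kc) E1 => [eka|nka].
    * subst ka; move=> _; left; split => //.
      move: (E k); rewrite eqxx (eq_sym k kc) (negbTE hkc) /= => /eqP ->. done.
    * rewrite /= => /eqP ekb; rewrite -{}ekb in E *; right; split => //.
      move: (E k); rewrite eqxx (eq_sym k kc) (negbTE hkc) /=.
      by case: (eqVneq k ka) => [->|] //= _; rewrite addbF.
  + have [j] := avoid3 ka kc k hn; rewrite !inE !negb_or => /and3P [h1 h2 h3].
    by move: (E j); rewrite (negbTE h1) (negbTE h2) (negbTE h3).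
  + have [j] := avoid3 kb kc k hn; rewrite !inE !negb_or => /and3P [h1 h2 h3].
    by move: (E j); rewrite (negbTE h1) (negbTE h2) (negbTE h3).
  + by move: (E kc); rewrite eqxx (negbTE hkc).
- case: a b E => [ka|] [kb|] /= E.
  + have [j] := avoid3 ka kb k hn; rewrite !inE !negb_or => /and3P [h1 h2 h3].
    by move: (E j); rewrite (negbTE h1) (negbTE h2) (negbTE h3).
  + right; split => //; move: (E k); rewrite eqxx /= addbT => /negbFE /eqP ->. done.
  + left; split => //; move: (E k); rewrite eqxx /= => /negbFE /eqP ->. done.
  + have [j] := avoid3 k k k hn; rewrite !inE !negb_or => /and3P [h1 h2 h3].
    by move: (E j); rewrite (negbTE h1).
Qed.

Lemma differ_nb n (x y : vtx n) (k : 'I_n) : differ_at x y k = (y == nb (Some k) x).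
Proof.
apply/forallP/eqP => [H | ->].
- apply/ffunP => j; rewrite ffunE /=; move: (H j); rewrite val_eqE.
  by case: (x j); case: (y j); case: (j == k).
- move=> j; rewrite ffunE /= val_eqE.
  by case: (x j); case: (j == k).
Qed.

Lemma compl_nb n (x y : vtx n) : is_compl x y = (y == nb None x).
Proof.
apply/forallP/eqP => [H | ->].
- by apply/ffunP => j; rewrite ffunE /= addbT; apply/eqP.
- by move=> j; rewrite ffunE /= addbT.
Qed.

Lemma Qadj_nb n (x y : vtx n) : Qadj x y = [exists k, y == nb (Some k) x].
Proof. by apply: eq_existsb => k; rewrite differ_nb. Qed.

Lemma FQadjP n (x y : vtx n) : FQadj x y -> exists d, y = nb d x.
Proof.
rewrite /FQadj Qadj_nb compl_nb => /orP [/existsP [k /eqP ->]|/eqP ->].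
- by exists (Some k).
- by exists None.
Qed.

Lemma FQadj_nb n d (x : vtx n) : FQadj x (nb d x).
Proof.
rewrite /FQadj Qadj_nb compl_nb; case: d => [k|].
- by apply/orP; left; apply/existsP; exists k.
- by rewrite eqxx orbT.
Qed.

Lemma const_t n (T : eqType) (t : vtx n -> T) :
  (forall x k, t (nb (Some k) x) = t x) -> forall x y, t x = t y.
Proof.
move=> Ht x y.
have H j : j <= n -> t x = t [ffun i : 'I_n => if i < j then y i else x i].
  elim: j => [|j IH] hj.
    by congr t; apply/ffunP => i; rewrite ffunE ltn0.
  rewrite IH ?(ltnW hj) //.
  pose j' := Ordinal hj.
  case: (eqVneq (x j') (y j')) => e.
  - congr t; apply/ffunP => i; rewrite !ffunE ltnS (leq_eqVlt i).
    case: (eqVneq i j') => [->|ne]; first by rewrite eqxx ltnn e.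
    have ne' : (nat_of_ord i == j) = false := negbTE ne.
    by rewrite ne'.
  - rewrite -(Ht _ j'); congr t; apply/ffunP => i; rewrite !ffunE /vd ltnS (leq_eqVlt i).
    case: (eqVneq i j') => [->|ne].
      by rewrite eqxx ltnn /=; move: e; case: (x j'); case: (y j').
    have ne' : (nat_of_ord i == j) = false := negbTE ne.
    by rewrite ne' /= addbF.
rewrite (H n (leqnn n)); congr t; apply/ffunP => i; by rewrite ffunE ltn_ord.
Qed.

Lemma Qcommon n (X Y U : vtx n) : X != Y -> Qadj X U -> Qadj U Y ->
  exists V, V != U /\ Qadj X V /\ Qadj V Y.
Proof.
move=> hXY; rewrite !Qadj_nb => /existsP [a /eqP eU] /existsP [b /eqP eY].
have ab : a != b.
  apply/eqP => eab; move: hXY; by rewrite eY eU eab nbK eqxx.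
exists (nb (Some b) X); split; last split.
- apply/eqP => e; have := congr1 (fun f : vtx n => f a) e.
  rewrite eU !ffunE /= eqxx; case: (eqVneq a b) ab => //= _ _.
  by case: (X a).
- by rewrite Qadj_nb; apply/existsP; exists b.
- rewrite Qadj_nb; apply/existsP; exists a; by rewrite eY eU nbC.
Qed.

Theorem theorem2 (n : nat) (M : rel (vtx n)) :
  4 <= n ->
  perfect_matching (@FQadj n) M ->
  (forall x y, M x y -> [|| M0 x y, M1 x y | M2 x y]) ->
  ~ (forall x y, M x y = M0 x y) ->
  ~ (forall x y, M x y = M1 x y) ->
  ~ (forall x y, M x y = M2 x y) ->
  ~ isomorphic (del_edges (@FQadj n) M) (@Qadj n).
Proof.
move=> hn [hsym [hadj hcard]] hsub nM0 nM1 nM2 [f [fbij Hf]].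
have hn3 : 3 < n by [].
have uniq x y y' : M x y -> M x y' -> y = y'.
  move=> h1 h2; have /cards1P [p Hp] : #|[set z | M x z]| == 1 by rewrite hcard.
  have : y \in [set z | M x z] by rewrite inE.
  have : y' \in [set z | M x z] by rewrite inE.
  by rewrite Hp !inE => /eqP -> /eqP ->.
have ex x : exists d, M x (nb d x).
  have /cards1P [p Hp] : #|[set z | M x z]| == 1 by rewrite hcard.
  have : p \in [set z | M x z] by rewrite Hp inE.
  rewrite inE => hp; have [d ed] := FQadjP (hadj _ _ hp); exists d; by rewrite -ed.
pose t x := odflt None [pick d | M x (nb d x)].
have T1 x : M x (nb (t x) x).
  rewrite /t; case: pickP => [d //|H]; have [d hd] := ex x; by rewrite H in hd.
have T2 x y : M x y -> y = nb (t x) x by move=> h; exact: uniq _ _ _ h (T1 x).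
have Mt x y : M x y = (y == nb (t x) x).
  by apply/idP/eqP => [/T2 //| ->]; exact: T1.
have h0 : n.-2 < n by lia.
have h1 : n.-1 < n by lia.
have M0E x y : M0 x y = (y == nb (Some (Ordinal h0)) x) by exact: (differ_nb x y (Ordinal h0)).
have M1E x y : M1 x y = (y == nb (Some (Ordinal h1)) x) by exact: (differ_nb x y (Ordinal h1)).
have M2E x y : M2 x y = (y == nb None x) by exact: compl_nb.
have Tx x a : M x (nb a x) -> t x = a.
  by move=> /T2 e; apply: (nb_inj hn3 (x := x)); rewrite -e.
have Ty x a : M x (nb a x) -> t (nb a x) = a.
  rewrite hsym => h; apply: Tx; by rewrite nbK.
case: (boolP [forall x, forall k, t (nb (Some k) x) == t x]) => [/forallP Hc | ].
- have Hc' x k : t (nb (Some k) x) = t x.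
    by apply/eqP; move/forallP: (Hc x) => /(_ k).
  have C := const_t Hc'.
  pose x0 : vtx n := [ffun => false].
  have Mc x y : M x y = (y == nb (t x0) x) by rewrite Mt (C x x0).
  have := hsub _ _ (T1 x0); rewrite M0E M1E M2E => /or3P [/eqP e|/eqP e|/eqP e];
    have et := nb_inj hn3 e.
  + by apply: nM0 => x y; rewrite Mc M0E et.
  + by apply: nM1 => x y; rewrite Mc M1E et.
  + by apply: nM2 => x y; rewrite Mc M2E et.
rewrite negb_forall => /existsP [x]; rewrite negb_forall => /existsP [k /eqP hne].
have hkd : t x != Some k.
  apply/eqP => e; apply: hne; rewrite e; apply: Ty; rewrite -e; exact: T1.
have hkd' : t (nb (Some k) x) != Some k.
  apply/eqP => e; apply: hne; rewrite e; symmetry; apply: Tx.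
  rewrite hsym; have := T1 (nb (Some k) x); by rewrite e nbK.
pose z := nb (Some k) x.
pose d' := t z.
pose w := nb d' z.
pose u0 := nb d' x.
have Ga : del_edges (@FQadj n) M x u0.
  rewrite /del_edges FQadj_nb Mt /=; apply/negP => /eqP e.
  by apply: hne; rewrite -(nb_inj hn3 e).
have Gb : del_edges (@FQadj n) M u0 w.
  have -> : w = nb (Some k) u0 by rewrite /w /u0 /z nbC.
  rewrite /del_edges FQadj_nb /=; apply/negP => h.
  have h2 : M (nb (Some k) u0) z.
    have -> : nb (Some k) u0 = w by rewrite /w /u0 /z nbC.
    by rewrite hsym; exact: T1.
  have eu := uniq _ _ _ (etrans (hsym _ _) h) h2.
  by move: hkd'; rewrite -/z -/d' (nb_inj hn3 eu) eqxx.
have Gz : M z w by exact: T1.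
have xw : x != w.
  apply/eqP => e; have h := congr1 (nb d') e; rewrite /w nbK in h.
  by move: hkd'; rewrite -/z -/d' (nb_inj hn3 h) eqxx.
have uniqG u : del_edges (@FQadj n) M x u -> del_edges (@FQadj n) M u w -> u = u0.
  move=> /andP [a1 a2] /andP [b1 b2].
  have [a ea] := FQadjP a1; have [b eb] := FQadjP b1.
  rewrite ea in eb.
  case: (key hn3 hkd' (esym eb)) => [[ae _]|[ae _]].
    by rewrite ea ae.
  by move: b2; rewrite ea ae -/z Gz.
have [g fK gK] := fbij.
have fxw : f x != f w by apply: contra xw => /eqP/(can_inj fK) ->.
have [V [hV [q1 q2]]] := Qcommon fxw (etrans (esym (Hf _ _)) Ga) (etrans (esym (Hf _ _)) Gb).
have e : g V = u0.
  apply: uniqG; rewrite Hf gK //.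
by move: hV; rewrite -e gK eqxx.
Qed.
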